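(* The complement $\mathbb{R}^3\setminus(\mathcal{C}\cup Son\cup Son')$ has exactly twelve connected components (six in the half-space $Y>0$ and six in the half-space $Y<0$, the two collections being exchanged by the reflection $(z,\tau,Y)\mapsto(z,\tau,-Y)$).
   Context: Fix $b_1>1$ and $c>0$. In $\mathbb{R}^3$ with coordinates $(z,\tau,Y)$, let $\mathcal{C}=\{Y=0\}$, let the sonic surface $Son$ be the zero set of $c\,z[(b_1+1)z^2+3]\tau+[(b_1+1)z^2-1]\frac{Y}{2}+\frac{c[(b_1-1)z^2+1]}{z^2+1}$, and let the sonic$'$ surface $Son'$ be the zero set of $c\,z[(b_1+1)z^2+3]\tau-[(b_1+1)z^2-1]\frac{Y}{2}+\frac{c[(b_1-1)z^2+1]}{z^2+1}$. *)

(* Defs.v *)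
From HB Require Import structures.
From mathcomp Require Import all_boot all_order all_algebra.
From mathcomp Require Import all_classical all_reals all_analysis.
Set Implicit Arguments. Unset Strict Implicit. Unset Printing Implicit Defensive.
Import Order.TTheory GRing.Theory Num.Theory.
Import numFieldTopology.Exports numFieldNormedType.Exports.
Local Open Scope classical_set_scope.
Local Open Scope ring_scope.

(* Points of R^3 with coordinates (z, tau, Y) are represented as ((z, tau), Y). *)
Notation pt R := (R * R * R)%type.

Definition zc (R : realType) (p : pt R) : R := p.1.1.
Definition tauc (R : realType) (p : pt R) : R := p.1.2.
Definition Yc (R : realType) (p : pt R) : R := p.2.

Definition Cset (R : realType) : set (pt R) := [set p | Yc p = 0].

Definition son_fun (R : realType) (b1 c : R) (p : pt R) : R :=
  let z := zc p in
  c * z * ((b1 + 1) * z ^+ 2 + 3) * tauc p + ((b1 + 1) * z ^+ 2 - 1) * (Yc p / 2)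
  + c * ((b1 - 1) * z ^+ 2 + 1) / (z ^+ 2 + 1).

Definition son'_fun (R : realType) (b1 c : R) (p : pt R) : R :=
  let z := zc p in
  c * z * ((b1 + 1) * z ^+ 2 + 3) * tauc p - ((b1 + 1) * z ^+ 2 - 1) * (Yc p / 2)
  + c * ((b1 - 1) * z ^+ 2 + 1) / (z ^+ 2 + 1).

Definition Son (R : realType) (b1 c : R) : set (pt R) := [set p | son_fun b1 c p = 0].
Definition Son' (R : realType) (b1 c : R) : set (pt R) := [set p | son'_fun b1 c p = 0].

Definition Omega (R : realType) (b1 c : R) : set (pt R) :=
  ~` (@Cset R `|` Son b1 c `|` Son' b1 c).

Definition components (R : realType) (b1 c : R) : set (set (pt R)) :=
  connected_component (Omega b1 c) @` (Omega b1 c).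

Definition reflY (R : realType) (p : pt R) : pt R := (p.1, - p.2).

(* Main.v *)
Require Import Defs.
From HB Require Import structures.
From mathcomp Require Import all_boot all_order all_algebra.
From mathcomp Require Import all_classical all_reals all_analysis.
From mathcomp Require Import ring lra.
Import Order.TTheory GRing.Theory Num.Theory.
Import numFieldTopology.Exports numFieldNormedType.Exports.
Local Open Scope classical_set_scope.
Local Open Scope ring_scope.
Section S.
Variable R : realType.
Lemma fst_cont {T U : topologicalType} : continuous (@fst T U).
Proof. by move=> p; apply: cvg_fst. Qed.
Lemma snd_cont {T U : topologicalType} : continuous (@snd T U).
Proof. by move=> p; apply: cvg_snd. Qed.
Lemma zc_cont : continuous (@zc R).
Proof. move=> p. exact: (continuous_comp (fst_cont p) (fst_cont p.1)). Qed.
Lemma tauc_cont : continuous (@tauc R).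
Proof. move=> p. exact: (continuous_comp (fst_cont p) (snd_cont p.1)). Qed.
Lemma Yc_cont : continuous (@Yc R).
Proof. move=> p. apply: snd_cont. Qed.
Section C.
Variable T : topologicalType.
Lemma cD (f g : T -> R) x : {for x, continuous f} -> {for x, continuous g} -> {for x, continuous (fun y => f y + g y)}.
Proof. exact: continuousD. Qed.
Lemma cB (f g : T -> R) x : {for x, continuous f} -> {for x, continuous g} -> {for x, continuous (fun y => f y - g y)}.
Proof. move=> ? ?; apply: cD => //; exact: continuousN. Qed.
Lemma cM (f g : T -> R) x : {for x, continuous f} -> {for x, continuous g} -> {for x, continuous (fun y => f y * g y)}.
Proof. exact: continuousM. Qed.
Lemma cX (f : T -> R) x : {for x, continuous f} -> {for x, continuous (fun y => f y ^+ 2)}.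
Proof. move=> ?; have -> : (fun y => f y ^+ 2) = (fun y => f y * f y) by apply/funext=> y; rewrite expr2.
exact: cM. Qed.
Lemma cV (f : T -> R) x : f x != 0 -> {for x, continuous f} -> {for x, continuous (fun y => (f y)^-1)}.
Proof. move=> ? ?; exact: continuousV. Qed.
Lemma cdiv (f g : T -> R) x : g x != 0 -> {for x, continuous f} -> {for x, continuous g} -> {for x, continuous (fun y => f y / g y)}.
Proof. move=> ? ? ?; apply: cM => //; exact: cV. Qed.
Lemma cC (k : R) x : {for x, continuous (fun _ : T => k)}.
Proof. exact: cst_continuous. Qed.
End C.
Ltac cstep := lazymatch goal with
 | |- continuous_at _ (fun y => @?a y - @?b y) => eapply (cB _ a b)
 | |- continuous_at _ (fun y => @?a y + @?b y) => eapply (cD _ a b)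
 | |- continuous_at _ (fun y => @?a y / @?b y) => eapply (cdiv _ a b)
 | |- continuous_at _ (fun y => @?a y ^+ 2) => eapply (cX _ a)
 | |- continuous_at _ (fun y => @?a y * @?b y) => eapply (cM _ a b)
 | |- continuous_at _ (fun y => zc y) => apply: zc_cont
 | |- continuous_at _ (fun y => tauc y) => apply: tauc_cont
 | |- continuous_at _ (fun y => Yc y) => apply: Yc_cont
 | |- continuous_at _ (zc (R:=_)) => apply: zc_cont
 | |- continuous_at _ (tauc (R:=_)) => apply: tauc_cont
 | |- continuous_at _ (Yc (R:=_)) => apply: Yc_cont
 | |- continuous_at _ (fun y => _) => apply: cC
 end.
Lemma son_cont (b1 c : R) : continuous (son_fun b1 c).
Proof.
move=> p; rewrite /son_fun /=.
do 60 try (try unfold prop_for; cbv beta; cstep).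
all: apply/negP => /eqP; nra.
Qed.

Lemma cI (T : topologicalType) (x : T) : {for x, continuous (fun y : T => y)}.
Proof. exact: cvg_id. Qed.

Lemma cpair (T U V : topologicalType) (f : T -> U) (g : T -> V) x :
  {for x, continuous f} -> {for x, continuous g} -> {for x, continuous (fun y => (f y, g y))}.
Proof. move=> ? ?; rewrite /continuous_at; exact: cvg_pair. Qed.

Definition segp (a b : pt R) (t : R) : pt R :=
  ((a.1.1, (1 - t) * a.1.2 + t * b.1.2), (1 - t) * a.2 + t * b.2).

Lemma segp_cont a b : continuous (segp a b).
Proof.
move=> t; rewrite /segp.
eapply (cpair _ _ _ (fun x : R => (a.1.1, (1 - x) * a.1.2 + x * b.1.2)) (fun x : R => (1 - x) * a.2 + x * b.2)).
eapply (cpair _ _ _ (fun x : R => a.1.1) (fun x : R => (1 - x) * a.1.2 + x * b.1.2)).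
- exact: cst_continuous.
- eapply (cD _ (fun x : R => (1 - x) * a.1.2) (fun x : R => x * b.1.2)).
  + eapply (cM _ (fun x : R => 1 - x)). eapply (cB _ (fun _ : R => 1) (fun x : R => x)). exact: cC. exact: cI. exact: cC.
  + eapply (cM _ (fun x : R => x)). exact: cI. exact: cC.
- eapply (cD _ (fun x : R => (1 - x) * a.2) (fun x : R => x * b.2)).
  + eapply (cM _ (fun x : R => 1 - x)). eapply (cB _ (fun _ : R => 1) (fun x : R => x)). exact: cC. exact: cI. exact: cC.
  + eapply (cM _ (fun x : R => x)). exact: cI. exact: cC.
Qed.

Lemma fib_conn (S : set (pt R)) (J : set R) (tf yf : R -> R) :
  is_interval J -> J !=set0 ->
  (forall z, J z -> {for z, continuous tf}) ->
  (forall z, J z -> {for z, continuous yf}) ->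
  (forall z, J z -> S ((z, tf z), yf z)) ->
  (forall p, S p -> J (zc p)) ->
  (forall p, S p -> forall t, 0 <= t <= 1 -> S (segp ((zc p, tf (zc p)), yf (zc p)) p t)) ->
  connected S.
Proof.
move=> iJ [z0 Jz0] ctf cyf sigS SJ segS.
pose sig := fun z => ((z, tf z), yf z).
have csig : {within J, continuous sig}.
  apply: continuous_in_subspaceT => z; rewrite in_setE => Jz.
  eapply (cpair _ _ _ (fun z => (z, tf z)) yf); last exact: cyf.
  eapply (cpair _ _ _ (fun z => z) tf); [exact: cI|exact: ctf].
have cJ : connected (sig @` J) by apply: connected_continuous_connected => //; exact/connected_intervalP.
have -> : S = \bigcup_(p in S) (segp (sig (zc p)) p @` `[0, 1] `|` sig @` J).
  apply/seteqP; split=> [p Sp|q [p Sp [[t + <-]|[z Jz <-]]]].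
  - exists p => //; left; exists 1; first by rewrite /= in_itv /= lexx ler01.
    by case: p Sp => -[zp tp] yp Sp; rewrite /segp /sig /zc /=; congr (_, _, _); ring.
  - by rewrite /= in_itv /= => tin; apply: segS.
  - exact: sigS.
apply: bigcup_connected.
  by exists (sig z0) => p Sp; right; exists z0.
move=> p Sp; apply: connectedU => //.
- exists (sig (zc p)); split; last by exists (zc p) => //; exact: SJ.
  exists 0; first by rewrite /= in_itv /= lexx ler01.
  by rewrite /segp /sig /=; congr (_, _, _); ring.
- apply: connected_continuous_connected; first exact: segment_connected.
  exact/continuous_subspaceT/segp_cont.
Qed.
End S.
Arguments segp {R}.
Arguments fib_conn {R}.

Definition labf (e a b w : bool) : nat :=
  (if e then (if b then (if a then 0 else 5) else (if a then (if w then 3 else 4) else (if w then 1 else 2)))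
   else (if a then (if b then 6 else 11) else (if b then (if w then 9 else 10) else (if w then 7 else 8))))%N.
Definition swapn (i : nat) : nat := if (i < 6)%N then (i + 6)%N else (i - 6)%N.

Lemma labf_inj3 e a b w e' a' b' w' : labf e a b w = labf e' a' b' w' -> [/\ e = e', a = a' & b = b'].
Proof. case: e; case: a; case: b; case: w; case: e'; case: a'; case: b'; case: w' => /= H; try discriminate. all: by []. Qed.
Lemma labf_w (e a b w w' : bool) : (if e then b else a) -> labf e a b w = labf e a b w'.
Proof. case: e; case: a; case: b; case: w; case: w' => /= H; by []. Qed.
Lemma labf_refl e a b w : labf (~~ e) b a w = swapn (labf e a b w).
Proof. by case: e; case: a; case: b; case: w. Qed.
Lemma labf_lt e a b w : (labf e a b w < 12)%N.
Proof. by case: e; case: a; case: b; case: w. Qed.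
Lemma labf_e e a b w : (labf e a b w < 6)%N = e.
Proof. by case: e; case: a; case: b; case: w. Qed.

Section Main.
Variables (R : realType) (b1 c : R).
Hypotheses (hb1 : 1 < b1) (hc : 0 < c).
Local Notation son := (son_fun b1 c).
Local Notation son' := (son'_fun b1 c).
Local Notation Om := (Omega b1 c).
Local Ltac nra' := have ? := hb1; have ? := hc; nra.
Local Ltac lra' := have ? := hb1; have ? := hc; lra.

Lemma OmP p : Om p <-> [/\ Yc p != 0, son p != 0 & son' p != 0].
Proof.
rewrite /Omega /Cset /Son /Son' /=; split.
  by move=> H; split; apply/eqP => E; apply: H; [left; left|left; right|right].
by case=> /eqP a /eqP b /eqP d [[]|].
Qed.

Definition Af (z : R) := c * z * ((b1 + 1) * z ^+ 2 + 3).
Definition Bf (z : R) := (b1 + 1) * z ^+ 2 - 1.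
Definition Df (z : R) := c * ((b1 - 1) * z ^+ 2 + 1) / (z ^+ 2 + 1).

Lemma son_sig z t y : son ((z, t), y) = Af z * t + Bf z * (y / 2) + Df z.
Proof. by []. Qed.
Lemma son'_sig z t y : son' ((z, t), y) = Af z * t - Bf z * (y / 2) + Df z.
Proof. by []. Qed.
Lemma Df_pos z : 0 < Df z.
Proof. have hz : 0 <= z ^+ 2 := sqr_ge0 z.
rewrite /Df; move: (z ^+ 2) hz => w hz; apply: divr_gt0; [apply: mulr_gt0 => //|]. all: nra'. Qed.

Lemma sign_const (S : set (pt R)) (f : pt R -> R) : connected S -> continuous f ->
  (forall r, S r -> f r != 0) -> forall p q, S p -> S q -> (0 < f p) = (0 < f q).
Proof.
move=> cS cf nz p q Sp Sq.
have iI : is_interval (f @` S).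
  by apply/connected_intervalP/connected_continuous_connected => //; exact: continuous_subspaceT.
have key : forall x y, S x -> S y -> 0 < f x -> f y <= 0 -> False.
  move=> x y Sx Sy fx fy.
  have : (f @` S) 0 by apply: (iI (f y) (f x)); [exists y|exists x|rewrite fy ltW].
  by case=> r Sr fr0; move: (nz r Sr); rewrite fr0 eqxx.
have [fp|fp] := ltP 0 (f p); have [fq|fq] := ltP 0 (f q) => //.
  by case: (key p q).
by case: (key q p).
Qed.

Lemma zc_nz r : Om r -> ~~ (if 0 < Yc r then 0 < son' r else 0 < son r) -> zc r != 0.
Proof.
case: r => -[z t] y /OmP[/= hy _ _] Hn; apply/eqP => z0; move: Hn.
rewrite /zc /= in z0; rewrite son_sig son'_sig /Yc /= z0 /Af /Bf /Df !(expr0n, mulr0, mul0r, add0r, addr0, divr1) /=.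
rewrite !(mulr0, mul0r, add0r, addr0, mulr1, divr1, mul1r).
have [yp|yn] := ltP 0 y.
  by apply/negP; rewrite negbK; lra'.
have yneg : y < 0 by rewrite lt_neqAle hy yn.
by apply/negP; rewrite negbK; lra'.
Qed.




Lemma cN' (T : topologicalType) (f : T -> R) x : {for x, continuous f} -> {for x, continuous (fun y => - f y)}.
Proof. exact: continuousN. Qed.

Ltac cstep0 := lazymatch goal with
 | |- continuous_at _ (fun y => @?a y - @?b y) => eapply (cB _ _ a b)
 | |- continuous_at _ (fun y => @?a y + @?b y) => eapply (cD _ _ a b)
 | |- continuous_at _ (fun y => - @?a y) => eapply (cN' _ a)
 | |- continuous_at _ (fun y => @?a y / @?b y) => eapply (cdiv _ _ a b)
 | |- continuous_at _ (fun y => @?a y ^+ 2) => eapply (cX _ _ a)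
 | |- continuous_at _ (fun y => @?a y * @?b y) => eapply (cM _ _ a b)
 | |- continuous_at _ (fun y => y) => eapply cI
 | |- continuous_at _ (fun y => _) => eapply cC
 end.

Lemma son'_cont : continuous son'.
Proof.
move=> p; rewrite /son'_fun /=.
do 60 try (try unfold prop_for; cbv beta; cstep0).
all: first [exact: zc_cont | exact: tauc_cont | exact: Yc_cont | apply/negP => /eqP; nra].
Qed.
Lemma cont_Af z : {for z, continuous Af}.
Proof. rewrite /Af. do 30 try (try unfold prop_for; cbv beta; cstep0). Qed.
Lemma cont_Bf z : {for z, continuous Bf}.
Proof. rewrite /Bf. do 30 try (try unfold prop_for; cbv beta; cstep0). Qed.
Lemma cont_Df z : {for z, continuous Df}.
Proof. rewrite /Df. do 30 try (try unfold prop_for; cbv beta; cstep0). apply/negP => /eqP; nra. Qed.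

Ltac cstep1 := lazymatch goal with
 | |- continuous_at _ (fun y => Af y) => eapply cont_Af
 | |- continuous_at _ (fun y => Bf y) => eapply cont_Bf
 | |- continuous_at _ (fun y => Df y) => eapply cont_Df
 | |- continuous_at _ Af => eapply cont_Af
 | |- continuous_at _ Bf => eapply cont_Bf
 | |- continuous_at _ Df => eapply cont_Df
 | _ => cstep0
 end.
Ltac ccont := do 40 try (try unfold prop_for; cbv beta; cstep1).

Lemma reflY_cont : continuous (@reflY R).
Proof.
move=> p; rewrite /reflY.
eapply (cpair _ _ _ (fun q : pt R => q.1) (fun q : pt R => - q.2)); first exact: fst_cont.
eapply (cN' _ (fun q : pt R => q.2)); exact: snd_cont.
Qed.

Lemma refl_Y (p : pt R) : Yc (reflY p) = - Yc p. Proof. by []. Qed.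
Lemma refl_z (p : pt R) : zc (reflY p) = zc p. Proof. by []. Qed.
Lemma refl_son p : son (reflY p) = son' p.
Proof. by case: p => -[z t] y; rewrite /reflY /= son_sig son'_sig; ring. Qed.
Lemma refl_son' p : son' (reflY p) = son p.
Proof. by case: p => -[z t] y; rewrite /reflY /= son_sig son'_sig; ring. Qed.
Lemma reflYK (p : pt R) : reflY (reflY p) = p.
Proof. by case: p => [? ?]; rewrite /reflY /= opprK. Qed.

Lemma Om_refl p : Om (reflY p) <-> Om p.
Proof. by rewrite !OmP refl_Y refl_son refl_son' oppr_eq0; split; case. Qed.

Lemma neg_sgn (x : R) : x != 0 -> (0 < - x) = ~~ (0 < x).
Proof. by move=> hx; rewrite oppr_gt0; have [h|h|h] := ltrgtP x 0 => //; move: hx; rewrite h eqxx. Qed.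

Definition lab (p : pt R) : nat := labf (0 < Yc p) (0 < son p) (0 < son' p) (0 < zc p).
Definition region (i : nat) : set (pt R) := [set p | Om p /\ lab p = i].

Lemma lab_lt p : (lab p < 12)%N. Proof. exact: labf_lt. Qed.

Lemma lab_refl p : Om p -> lab (reflY p) = swapn (lab p).
Proof.
move=> /OmP[hy _ _]; rewrite /lab refl_Y refl_son refl_son' refl_z neg_sgn //.
exact: labf_refl.
Qed.

Lemma swapnK i : (i < 12)%N -> swapn (swapn i) = i.
Proof. by move=> h; do 12! (case: i h => [|i] h //). Qed.
Lemma swapn_lt i : (i < 12)%N -> (swapn i < 12)%N.
Proof. by move=> h; do 12! (case: i h => [|i] h //). Qed.

Lemma region_refl i : (i < 12)%N -> @reflY R @` region i = region (swapn i).
Proof.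
move=> hi; apply/seteqP; split.
  by move=> _ [p [Op lp] <-]; split; [exact/Om_refl|rewrite lab_refl // lp].
move=> q [Oq lq]; exists (reflY q); last exact: reflYK.
split; first exact/Om_refl.
by rewrite lab_refl // lq swapnK.
Qed.

Lemma conv_sign {x y t : R} : x != 0 -> y != 0 -> (0 < x) = (0 < y) -> 0 <= t <= 1 ->
  ((1 - t) * x + t * y != 0) /\ ((0 < (1 - t) * x + t * y) = (0 < x)).
Proof.
move=> hx hy hxy /andP[t0 t1]; have [xp|xn] := ltP 0 x.
  have yp : 0 < y by rewrite -hxy.
  have mp : 0 < (1 - t) * x + t * y by nra.
  by rewrite (gt_eqF mp) mp.
have yn : y <= 0 by rewrite leNgt -hxy -leNgt.
have xn' : x < 0 by rewrite lt_neqAle hx xn.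
have yn' : y < 0 by rewrite lt_neqAle hy yn.
have mn : (1 - t) * x + t * y < 0 by nra.
by rewrite (lt_eqF mn) ltNge (ltW mn).
Qed.

Lemma seg_son a p t : zc a = zc p -> son (segp a p t) = (1 - t) * son a + t * son p.
Proof.
case: a => -[za ta] ya; case: p => -[zp tp] yp; rewrite /zc /= => E; rewrite -E.
by rewrite /segp /= !son_sig; ring.
Qed.
Lemma seg_son' a p t : zc a = zc p -> son' (segp a p t) = (1 - t) * son' a + t * son' p.
Proof.
case: a => -[za ta] ya; case: p => -[zp tp] yp; rewrite /zc /= => E; rewrite -E.
by rewrite /segp /= !son'_sig; ring.
Qed.

Lemma seg_region {a p : pt R} {t : R} : Om a -> Om p -> zc a = zc p -> lab a = lab p -> 0 <= t <= 1 ->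
  Om (segp a p t) /\ lab (segp a p t) = lab a.
Proof.
move=> /OmP[ya sa sa'] /OmP[yp sp sp'] ez /labf_inj3[e1 e2 e3] htt.
have [h1 h1'] := conv_sign ya yp e1 htt.
have [h2 h2'] := conv_sign sa sp e2 htt.
have [h3 h3'] := conv_sign sa' sp' e3 htt.
have eY : Yc (segp a p t) = (1 - t) * Yc a + t * Yc p by [].
split; first by apply/OmP; rewrite eY seg_son // seg_son' //.
by rewrite /lab eY seg_son // seg_son' // h1' h2' h3'.
Qed.

Lemma region_conn (i : nat) (J : set R) (tf yf : R -> R) : is_interval J -> J !=set0 ->
  (forall z, J z -> {for z, continuous tf}) -> (forall z, J z -> {for z, continuous yf}) ->
  (forall z, J z -> region i ((z, tf z), yf z)) -> (forall p, region i p -> J (zc p)) ->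
  connected (region i) /\ region i !=set0.
Proof.
move=> iJ nJ ct cy sS SJ; split; last by case: nJ => z Jz; exists ((z, tf z), yf z); exact: sS.
refine (fib_conn _ _ _ _ iJ nJ ct cy sS SJ _) => p [Op lp] t htt.
have [Oa la] := sS _ (SJ p (conj Op lp)).
have [Os ls] := seg_region Oa Op erefl (etrans la (esym lp)) htt.
by split => //; rewrite ls la.
Qed.

Lemma sgn_if (x : R) (e : bool) : (if e then 0 < x else x < 0) -> x != 0 /\ (0 < x) = e.
Proof. by case: e => h; [rewrite (gt_eqF h) h | rewrite (lt_eqF h) ltNge (ltW h)]. Qed.

Lemma reg_of (z t y : R) (e a b : bool) i :
  (if e then 0 < y else y < 0) -> (if a then 0 < son ((z, t), y) else son ((z, t), y) < 0) ->
  (if b then 0 < son' ((z, t), y) else son' ((z, t), y) < 0) -> labf e a b (0 < z) = i ->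
  region i ((z, t), y).
Proof.
move=> /sgn_if[ny ey] /sgn_if[na ea] /sgn_if[nb eb] hl; split; first by apply/OmP.
by rewrite /lab; change (Yc ((z, t), y)) with y; change (zc ((z, t), y)) with z; rewrite ey ea eb.
Qed.

Lemma pos_aux (D u X : R) : 0 < D -> 0 < u -> 0 < 2 * u + X -> 0 < X * (D / u / 2) + D.
Proof.
move=> hD hu hX; have -> : X * (D / u / 2) + D = D * (2 * u + X) / (2 * u).
  by field; rewrite gt_eqF.
by apply: divr_gt0; [apply: mulr_gt0|lra].
Qed.
Lemma neg_aux (D u X : R) : 0 < D -> 0 < u -> 2 * u + X < 0 -> X * (D / u / 2) + D < 0.
Proof.
move=> hD hu hX; have -> : X * (D / u / 2) + D = - (D * (- (2 * u + X)) / (2 * u)).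
  by field; rewrite gt_eqF.
by rewrite oppr_lt0; apply: divr_gt0; [apply: mulr_gt0; lra|lra].
Qed.

Lemma decode {p : pt R} {i : nat} {e a b w : bool} : region i p -> i = labf e a b w ->
  [/\ Om p, (0 < Yc p) = e, (0 < son p) = a & (0 < son' p) = b].
Proof. by move=> [Op lp] ei; rewrite ei in lp; case/labf_inj3: lp => h1 h2 h3; split. Qed.

Lemma pos_of {x : R} : x != 0 -> (0 < x) = false -> x < 0.
Proof. by move=> h1 h2; rewrite lt_neqAle h1 leNgt h2. Qed.


Lemma labf_wP (e a b w : bool) : ~~ (if e then b else a) -> labf e a b w = labf e a b true -> w.
Proof. by case: e; case: a; case: b; case: w. Qed.
Lemma labf_wnP (e a b w : bool) : ~~ (if e then b else a) -> labf e a b w = labf e a b false -> ~~ w.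
Proof. by case: e; case: a; case: b; case: w. Qed.

Lemma Af_nz {z : R} : z != 0 -> Af z != 0.
Proof.
move=> hz; rewrite /Af; apply: mulf_neq0; first by apply: mulf_neq0 => //; rewrite gt_eqF.
have := sqr_ge0 z; move: (z ^+ 2) => w hw; rewrite gt_eqF //; nra'.
Qed.

Lemma reg0 : connected (region 0) /\ region 0 !=set0.
Proof.
apply: (region_conn 0 setT (fun _ => 0) (fun z => Df z / (1 + Bf z ^+ 2))).
- by move=> x y _ _ z _.
- by exists 0.
- by move=> z _; eapply cC.
- move=> z _; ccont; have := sqr_ge0 (Bf z); move: (Bf z ^+ 2) => w hw; apply/negP => /eqP; lra.
- move=> z _; have hu : 0 < 1 + Bf z ^+ 2 by have := sqr_ge0 (Bf z); lra.
  apply: (reg_of _ _ _ true true true) => //.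
  + exact: divr_gt0 (Df_pos z) hu.
  + rewrite son_sig mulr0 add0r; apply: pos_aux (Df_pos z) hu _.
    by have := sqr_ge0 (4 * Bf z + 1); nra.
  + rewrite son'_sig mulr0 add0r -mulNr; apply: pos_aux (Df_pos z) hu _.
    by have := sqr_ge0 (4 * Bf z - 1); nra.
- by [].
Qed.


Lemma reg5 : connected (region 5) /\ region 5 !=set0.
Proof.
apply: (region_conn 5 [set z | Bf z < 0] (fun _ => 0) (fun z => Df z / (- Bf z / 4))).
- move=> x y /= hx hy m /andP[hxm hmy]; rewrite /Bf in hx hy *.
  have hb : 0 <= b1 + 1 by lra'.
  have [hm|hm] := lerP 0 m.
    have hsq : m ^+ 2 <= y ^+ 2 by nra.
    have hd : 0 <= y ^+ 2 - m ^+ 2 by rewrite subr_ge0.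
    have := mulr_ge0 hb hd; nra.
  have hsq : m ^+ 2 <= x ^+ 2 by nra.
  have hd : 0 <= x ^+ 2 - m ^+ 2 by rewrite subr_ge0.
  have := mulr_ge0 hb hd; nra.
- by exists 0; rewrite /= /Bf; nra'.
- by move=> z _; eapply cC.
- move=> z /= hz; ccont; apply/negP => /eqP; lra.
- move=> z /= hz; have hu : 0 < - Bf z / 4 by lra.
  apply: (reg_of _ _ _ true false true) => //.
  + exact: divr_gt0 (Df_pos z) hu.
  + rewrite son_sig mulr0 add0r; apply: neg_aux (Df_pos z) hu _; lra.
  + rewrite son'_sig mulr0 add0r -mulNr; apply: pos_aux (Df_pos z) hu _; lra.
- move=> [[z t] y] H.
  have [Op ey ea eb] := decode H (erefl : 5%N = labf true false true true).
  have /OmP[ny ns ns'] := Op.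
  have hy : 0 < y := ey.
  have hs := pos_of ns ea.
  have hs' : 0 < son' ((z, t), y) := eb.
  rewrite son_sig in hs; rewrite son'_sig in hs'; rewrite /zc /=.
  nra.
Qed.


Definition J34 (pz : bool) : set R := [set z : R | (if pz then 0 < z else z < 0) /\ 0 < Bf z].
Definition J12 (pz : bool) : set R := [set z : R | (if pz then 0 < z else z < 0)].

Lemma reg34 (pz : bool) :
  connected (region (if pz then 3 else 4)%N) /\ region (if pz then 3 else 4)%N !=set0.
Proof.
apply: (region_conn _ (J34 pz) (fun _ => 0) (fun z => Df z / (Bf z / 4))).
- move=> x y [hx1 hx] [hy1 hy] m /andP[hxm hmy]; rewrite /J34 /Bf in hx hy *.
  have hb : 0 <= b1 + 1 by lra'.
  case: pz hx1 hy1 => hx1 hy1.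
    have hm : 0 < m by lra.
    have hsq : x ^+ 2 <= m ^+ 2 by nra.
    have hd : 0 <= m ^+ 2 - x ^+ 2 by rewrite subr_ge0.
    by split => //; have := mulr_ge0 hb hd; nra.
  have hm : m < 0 by lra.
  have hsq : y ^+ 2 <= m ^+ 2 by nra.
  have hd : 0 <= m ^+ 2 - y ^+ 2 by rewrite subr_ge0.
  by split => //; have := mulr_ge0 hb hd; nra.
- exists (if pz then 1 else -1); rewrite /J34 /Bf; case: pz; split; nra'.
- by move=> z _; eapply cC.
- move=> z [_ hz]; ccont; apply/negP => /eqP; lra.
- move=> z [hz1 hz]; have hu : 0 < Bf z / 4 by lra.
  apply: (reg_of _ _ _ true true false).
  + exact: divr_gt0 (Df_pos z) hu.
  + rewrite son_sig mulr0 add0r; apply: pos_aux (Df_pos z) hu _; lra.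
  + rewrite son'_sig mulr0 add0r -mulNr; apply: neg_aux (Df_pos z) hu _; lra.
  + by case: pz hz1 => hz1; [rewrite hz1 | rewrite ltNge (ltW hz1)].
- move=> [[z t] y] H.
  have ei : (if pz then 3 else 4)%N = labf true true false pz by case: pz {H}.
  have [Op ey ea eb] := decode H ei.
  have /OmP[ny ns ns'] := Op.
  have hy : 0 < y := ey.
  have hs : 0 < son ((z, t), y) := ea.
  have hs' := pos_of ns' eb.
  have [_ lp] := H.
  rewrite /lab ey ea eb in lp.
  rewrite son_sig in hs; rewrite son'_sig in hs'; rewrite /zc /J34 /=.
  split; last by nra.
  case: pz {H ei} lp => /= lp.
    change (0 < zc ((z, t), y)); move: lp; case: (ltP 0 (zc ((z, t), y))) => // _ /= H'; discriminate.
  have hle : zc ((z, t), y) <= 0.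
    by move: lp; case: (ltP 0 (zc ((z, t), y))) => // _ /= H'; discriminate.
  change (zc ((z, t), y) < 0); rewrite lt_neqAle hle andbT.
  by apply: (zc_nz _ Op); rewrite ey eb.
Qed.

Lemma reg12 (pz : bool) :
  connected (region (if pz then 1 else 2)%N) /\ region (if pz then 1 else 2)%N !=set0.
Proof.
have Jnz : forall z, J12 pz z -> z != 0.
  by move=> z; rewrite /J12; case: pz => h; [rewrite gt_eqF|rewrite lt_eqF].
apply: (region_conn _ (J12 pz) (fun z => - (Df z + 1 + Bf z ^+ 2) / Af z) (fun _ => 1)).
- move=> x y hx hy m /andP[hxm hmy]; rewrite /J12 in hx hy *.
  by case: pz {Jnz} hx hy => /= hx hy; lra.
- by exists (if pz then 1 else -1); rewrite /J12; case: pz {Jnz} => /=; lra.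
- move=> z Jz; ccont; exact: Af_nz (Jnz z Jz).
- by move=> z _; eapply cC.
- move=> z Jz; have hA := Af_nz (Jnz z Jz).
  apply: (reg_of _ _ _ true false false).
  + exact: ltr01.
  + rewrite son_sig.
    have -> : Af z * (- (Df z + 1 + Bf z ^+ 2) / Af z) + Bf z * (1 / 2) + Df z
              = - (1 + Bf z ^+ 2) + Bf z / 2 by field.
    by have := sqr_ge0 (4 * Bf z - 1); nra.
  + rewrite son'_sig.
    have -> : Af z * (- (Df z + 1 + Bf z ^+ 2) / Af z) - Bf z * (1 / 2) + Df z
              = - (1 + Bf z ^+ 2) - Bf z / 2 by field.
    by have := sqr_ge0 (4 * Bf z + 1); nra.
  + by move: Jz; rewrite /J12; case: pz {Jnz} => hz1; [rewrite hz1 | rewrite ltNge (ltW hz1)].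
- move=> [[z t] y] H.
  have ei : (if pz then 1 else 2)%N = labf true false false pz by case: pz {H Jnz}.
  have [Op ey ea eb] := decode H ei.
  have [_ lp] := H.
  rewrite /lab ey ea eb in lp.
  rewrite /zc /J12 /=.
  case: pz {H ei Jnz} lp => /= lp.
    change (0 < zc ((z, t), y)); move: lp; case: (ltP 0 (zc ((z, t), y))) => // _ /= H'; discriminate.
  have hle : zc ((z, t), y) <= 0.
    by move: lp; case: (ltP 0 (zc ((z, t), y))) => // _ /= H'; discriminate.
  change (zc ((z, t), y) < 0); rewrite lt_neqAle hle andbT.
  by apply: (zc_nz _ Op); rewrite ey eb.
Qed.


Lemma region_lo i : (i < 6)%N -> connected (region i) /\ region i !=set0.
Proof.
case: i => [_|]; first exact: reg0.
case=> [_|]; first exact: (reg12 true).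
case=> [_|]; first exact: (reg12 false).
case=> [_|]; first exact: (reg34 true).
case=> [_|]; first exact: (reg34 false).
case=> [_|//]; exact: reg5.
Qed.

Lemma region_cn i : (i < 12)%N -> connected (region i) /\ region i !=set0.
Proof.
move=> hi; have [lo|hi6] := ltnP i 6; first exact: region_lo.
have hs : (swapn i < 6)%N by move: hi hi6; do 12! (case: i => [|i] //).
have [cs ns] := region_lo _ hs.
have -> : region i = @reflY R @` region (swapn i).
  by rewrite region_refl ?swapnK // (ltn_trans hs).
split; first by apply: connected_continuous_connected cs _; exact: continuous_subspaceT reflY_cont.
by case: ns => p rp; exists (reflY p); exists p.
Qed.

Lemma lab_const (S : set (pt R)) : connected S -> S `<=` Om ->
  forall p q, S p -> S q -> lab p = lab q.
Proof.
move=> cS SO.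
have nzY r : S r -> Yc r != 0 by move=> /SO /OmP[].
have nzA r : S r -> son r != 0 by move=> /SO /OmP[].
have nzB r : S r -> son' r != 0 by move=> /SO /OmP[].
have sY := sign_const _ _ cS (@Yc_cont R) nzY.
have sA := sign_const _ _ cS (@son_cont R b1 c) nzA.
have sB := sign_const _ _ cS son'_cont nzB.
move=> p q Sp Sq; rewrite /lab (sY p q Sp Sq) (sA p q Sp Sq) (sB p q Sp Sq).
case nw: (if 0 < Yc q then 0 < son' q else 0 < son q); first exact: labf_w.
have nzZ r : S r -> zc r != 0.
  move=> Sr; apply: (zc_nz _ (SO r Sr)).
  by rewrite (sY r q Sr Sq) (sA r q Sr Sq) (sB r q Sr Sq) nw.
by rewrite (sign_const _ _ cS (@zc_cont R) nzZ p q Sp Sq).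
Qed.

Lemma comp_eq p : Om p -> connected_component Om p = region (lab p).
Proof.
move=> Op; apply/seteqP; split.
  move=> q cq; have Oq := connected_component_sub cq; split => //.
  apply/esym; apply: (lab_const (connected_component Om p)) => //.
  - exact: component_connected.
  - exact: connected_component_sub.
  - exact: connected_component_refl.
apply: connected_component_max.
- by split.
- by move=> q [].
- by case: (region_cn _ (lab_lt p)).
Qed.


Lemma comps_eq : components b1 c = (fun i : 'I_12 => region i) @` setT.
Proof.
apply/seteqP; split.
  move=> _ [p Op <-]; exists (Ordinal (lab_lt p)) => //; by rewrite comp_eq.
move=> _ [i _ <-]; have [_ [p rp]] := region_cn _ (ltn_ord i).
case: rp => Op lp; exists p => //; by rewrite comp_eq // lp.
Qed.

Lemma reg_inj (i j : nat) : (i < 12)%N -> region i = region j -> i = j.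
Proof.
move=> hi E; have [_ [p [Op lp]]] := region_cn _ hi.
have : region j p by rewrite -E.
by case=> _ lj; rewrite -lp lj.
Qed.

Lemma main_thm :
  [/\ (components b1 c #= [set: 'I_12])%card,
      ([set K | components b1 c K /\ K `<=` [set p | 0 < Yc p]]
         #= [set: 'I_6])%card,
      ([set K | components b1 c K /\ K `<=` [set p | Yc p < 0]]
         #= [set: 'I_6])%card &
      forall K, components b1 c K -> components b1 c (@reflY R @` K)].
Proof.
split.
- rewrite comps_eq; apply: inj_card_eq => i j _ _ E; apply: val_inj.
  exact: reg_inj (ltn_ord i) E.
- have -> : [set K | components b1 c K /\ K `<=` [set p | 0 < Yc p]] =
            (fun k : 'I_6 => region k) @` setT.
    apply/seteqP; split.
      move=> K [cK sub]; move: cK; rewrite comps_eq => -[i _ eK]; move: sub; rewrite -eK => sub.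
      have [_ [p [Op lp]]] := region_cn _ (ltn_ord i).
      have h : (i < 6)%N by rewrite -lp /lab labf_e; exact: sub.
      by exists (Ordinal h).
    move=> _ [k _ <-]; split.
      by rewrite comps_eq; exists (widen_ord (isT : (6 <= 12)%N) k).
    move=> q [Oq lq] /=.
    rewrite -(labf_e (0 < Yc q) (0 < son q) (0 < son' q) (0 < zc q)).
    by change (lab q < 6)%N; rewrite lq ltn_ord.
  apply: inj_card_eq => i j _ _ E; apply: val_inj.
  exact: reg_inj (leq_trans (ltn_ord i) (isT : (6 <= 12)%N)) E.
- have -> : [set K | components b1 c K /\ K `<=` [set p | Yc p < 0]] =
            (fun k : 'I_6 => region (k + 6)) @` setT.
    apply/seteqP; split.
      move=> K [cK sub]; move: cK; rewrite comps_eq => -[i _ eK]; move: sub; rewrite -eK => sub.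
      have [_ [p [Op lp]]] := region_cn _ (ltn_ord i).
      have yn : Yc p < 0 by exact: sub.
      have h6 : (6 <= i)%N.
        by rewrite leqNgt -lp /lab labf_e ltNge (ltW yn).
      have h : (i - 6 < 6)%N.
        by move: (ltn_ord i) h6; move: (nat_of_ord i) => n; do 12! (case: n => [|n] //).
      by exists (Ordinal h) => //=; rewrite subnK.
    move=> _ [k _ <-]; split.
      have h : (k + 6 < 12)%N by rewrite -[12%N]/(6 + 6)%N ltn_add2r ltn_ord.
      by rewrite comps_eq; exists (Ordinal h).
    move=> q [Oq lq] /=.
    have /OmP[nq _ _] := Oq.
    apply: (pos_of nq).
    rewrite -(labf_e (0 < Yc q) (0 < son q) (0 < son' q) (0 < zc q)).
    by change ((lab q < 6)%N = false); rewrite lq ltnNge leq_addl.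
  apply: inj_card_eq => i j _ _ E; apply: val_inj; apply/(@addIn 6).
  apply: reg_inj E; by rewrite -[12%N]/(6 + 6)%N ltn_add2r ltn_ord.
- rewrite comps_eq => _ [i _ <-]; rewrite region_refl //.
  by exists (Ordinal (swapn_lt _ (ltn_ord i))).
Qed.

End Main.

Theorem proposition2 (R : realType) (b1 c : R) (hb1 : 1 < b1) (hc : 0 < c) :
  [/\ (components b1 c #= [set: 'I_12])%card,
      ([set K | components b1 c K /\ K `<=` [set p | 0 < Yc p]]
         #= [set: 'I_6])%card,
      ([set K | components b1 c K /\ K `<=` [set p | Yc p < 0]]
         #= [set: 'I_6])%card &
      forall K, components b1 c K -> components b1 c (@reflY R @` K)].
Proof. exact: main_thm. Qed.
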